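(* Let $D$ be an integral domain with quotient field $K$, $T$ an overring of $D$, $\star$ a semistar operation on $D$ and $\star'$ a semistar operation on $T$. The following are equivalent: (i) $T$ is $(\star,\star')$-linked to $D$; (ii) $\mathrm{Na}(D,\star)\subseteq\mathrm{Na}(T,\star')$; (iii) $\tilde\star\le(\widetilde{\star'})_D$, i.e. $E^{\tilde\star}\subseteq (ET)^{\widetilde{\star'}}$ for every $E\in\overline{\mathbf F}(D)$; (iv) $T$ is $(\tilde\star,\widetilde{\star'})$-linked to $D$; (v) $T^{\widetilde{\star'}}$ is an overring of $D^{\tilde\star}$ which is $(\dot{\tilde\star},\dot{\widetilde{\star'}})$-linked to $D^{\tilde\star}$.
   Context: Let $D$ be an integral domain with quotient field $K$. $\overline{\mathbf F}(D)$ denotes the set of all nonzero $D$-submodules of $K$ and $\mathbf f(D)$ the set of nonzero finitely generated $D$-submodules of $K$. A semistar operation on $D$ is a map $\star:\overline{\mathbf F}(D)\to\overline{\mathbf F}(D)$, $E\mapsto E^\star$, such that for all $0\ne x\in K$ and $E,F\in\overline{\mathbf F}(D)$: (1) $(xE)^\star=xE^\star$; (2) $E\subseteq F\Rightarrow E^\star\subseteq F^\star$; (3) $E\subseteq E^\star$ and $(E^\star)^\star=E^\star$. $\star_f$ is defined by $E^{\star_f}=\bigcup\{F^\star:F\in\mathbf f(D),F\subseteq E\}$. A nonzero ideal $I$ of $D$ is a quasi-$\star$-ideal if $I^\star\cap D=I$; a quasi-$\star$-maximal ideal is a maximal element among proper quasi-$\star$-ideals; $\mathcal M(\star_f)$ is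 the set of quasi-$\star_f$-maximal ideals of $D$, and $\tilde\star$ is the semistar operation $E^{\tilde\star}=\bigcap\{ED_Q:Q\in\mathcal M(\star_f)\}$ (equal to $K$ if $\mathcal M(\star_f)=\emptyset$). An overring of $D$ is a ring $T$ with $D\subseteq T\subseteq K$; all notions are defined analogously on $T$. For a semistar operation $\star$ on $D$, $\dot\star$ denotes the semistar operation $E\mapsto E^\star$ on the ring $D^\star$; similarly $\dot{\tilde\star}$ is $E\mapsto E^{\tilde\star}$ on $D^{\tilde\star}$ and $\dot{\widetilde{\star'}}$ is $E\mapsto E^{\widetilde{\star'}}$ on $T^{\widetilde{\star'}}$. $T$ is $(\star,\star')$-linked to $D$ if for every nonzero finitely generated ideal $F\subseteq D$ with $F^\star=D^\star$ one has $(FT)^{\star'}=T^{\star'}$. For $f\in D[X]$, $c(f)$ is its content; $\mathrm{Na}(D,\star):=D[X]_{N_D(\star)}$ with $N_D(\star)=\{h\in D[X]:h\ne0,\ c(h)^\star=D^\star\}$, and $\mathrm{Na}(T,\star')$ is defined analogously. *)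

(* Defs.v *)
From HB Require Import structures.
From mathcomp Require Import all_boot all_order all_algebra.
From mathcomp Require Import boolp classical_sets.
Set Implicit Arguments. Unset Strict Implicit. Unset Printing Implicit Defensive.
Import Order.TTheory GRing.Theory Num.Theory.
Local Open Scope ring_scope.
Local Open Scope classical_set_scope.

Section Semistar.
Variable K : fieldType.

(* R is a subring of K (containing 1); a subring of a field is a domain *)
Definition subring (R : set K) : Prop :=
  R 1 /\ (forall x y, R x -> R y -> R (x - y)) /\ (forall x y, R x -> R y -> R (x * y)).

Definition is_quotient_field (R : set K) : Prop :=
  forall x : K, exists a b, R a /\ R b /\ b != 0 /\ x = a / b.

Definition overring (R T : set K) : Prop := subring T /\ R `<=` T.

Definition submod (R E : set K) : Prop :=
  E 0 /\ (forall x y, E x -> E y -> E (x + y)) /\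
  (forall r x, R r -> E x -> E (r * x)).

Definition Fbar (R E : set K) : Prop := submod R E /\ exists x, x != 0 /\ E x.

Definition gen (R : set K) (s : seq K) : set K :=
  [set x | exists c : seq K, size c = size s /\
     (forall i, (i < size c)%N -> R c`_i) /\
     x = \sum_(i < size s) c`_i * s`_i].

Definition fg (R E : set K) : Prop := Fbar R E /\ exists s : seq K, E = gen R s.

Definition smul (x : K) (E : set K) : set K := (fun y => x * y) @` E.

Definition semistar (R : set K) (st : set K -> set K) : Prop :=
  (forall E, Fbar R E -> Fbar R (st E)) /\
  (forall x E, x != 0 -> Fbar R E -> st (smul x E) = smul x (st E)) /\
  (forall E F, Fbar R E -> Fbar R F -> E `<=` F -> st E `<=` st F) /\
  (forall E, Fbar R E -> E `<=` st E /\ st (st E) = st E).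

Definition star_f (R : set K) (st : set K -> set K) : set K -> set K :=
  fun E => [set x | exists F, fg R F /\ F `<=` E /\ st F x].

Definition qideal (R : set K) (st : set K -> set K) (I : set K) : Prop :=
  Fbar R I /\ I `<=` R /\ st I `&` R = I.

Definition qmax (R : set K) (st : set K -> set K) (Q : set K) : Prop :=
  qideal R st Q /\ ~ (R `<=` Q) /\
  (forall I, qideal R st I -> ~ (R `<=` I) -> Q `<=` I -> I = Q).

Definition locmod (R Q E : set K) : set K :=
  [set x | exists e s, E e /\ R s /\ ~ Q s /\ s != 0 /\ x = e / s].

(* tilde star: E |-> \bigcap_{Q in M(star_f)} E R_Q  (= K if M(star_f) is empty) *)
Definition stilde (R : set K) (st : set K -> set K) : set K -> set K :=
  fun E => [set x | forall Q, qmax R (star_f R st) Q -> locmod R Q E x].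

Definition prodmod (E T : set K) : set K :=
  [set x | exists es ts : seq K, size es = size ts /\
     (forall i, (i < size es)%N -> E es`_i) /\
     (forall i, (i < size ts)%N -> T ts`_i) /\
     x = \sum_(i < size es) es`_i * ts`_i].

Definition linked (R T : set K) (st st' : set K -> set K) : Prop :=
  forall F, fg R F -> F `<=` R -> st F = st R -> st' (prodmod F T) = st' T.

Definition polyR (R : set K) (p : {poly K}) : Prop := forall i, R p`_i.

Definition content (R : set K) (h : {poly K}) : set K := gen R (polyseq h).

(* Na(R, st) = R[X]_{N_R(st)} as a subring of K(X) *)
Definition Na (R : set K) (st : set K -> set K) : set {fraction {poly K}} :=
  [set z | exists f g : {poly K}, polyR R f /\ polyR R g /\ g != 0 /\
     st (content R g) = st R /\ z = (tofrac f) / (tofrac g)].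

End Semistar.

(* Main.v *)
Require Import Defs.
From HB Require Import structures.
From mathcomp Require Import all_boot all_order all_algebra.
From mathcomp Require Import boolp classical_sets.
Set Implicit Arguments. Unset Strict Implicit. Unset Printing Implicit Defensive.
Import GRing.Theory.
From mathcomp Require Import ring.
Local Open Scope ring_scope.
Local Open Scope classical_set_scope.

Section Basics.
Variable K : fieldType.
Implicit Types (R T D E M : set K) (s : seq K).

Lemma sr1 R : subring R -> R 1. Proof. by case. Qed.
Lemma sr0 R : subring R -> R 0.
Proof. by move=> [h1 [hB _]]; rewrite -(subrr 1); apply: hB. Qed.
Lemma srN R x : subring R -> R x -> R (- x).
Proof. by move=> hR hx; rewrite -sub0r; apply: hR.2.1 => //; apply: sr0. Qed.
Lemma srD R x y : subring R -> R x -> R y -> R (x + y).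
Proof. by move=> hR hx hy; rewrite -(opprK y); apply: hR.2.1 => //; apply: srN. Qed.
Lemma srM R x y : subring R -> R x -> R y -> R (x * y).
Proof. by move=> hR; apply: hR.2.2. Qed.

Lemma sm0 R M : submod R M -> M 0. Proof. by case. Qed.
Lemma smD R M x y : submod R M -> M x -> M y -> M (x + y).
Proof. by move=> [_ [h _]]; apply: h. Qed.
Lemma smM R M r x : submod R M -> R r -> M x -> M (r * x).
Proof. by move=> [_ [_ h]]; apply: h. Qed.
Lemma sm_sub R R' M : submod R M -> R' `<=` R -> submod R' M.
Proof. by move=> [h0 [hD hM]] hR; split=> //; split=> // r x /hR; apply: hM. Qed.
Lemma sm_self R : subring R -> submod R R.
Proof. by move=> hR; split; [exact: sr0|split=> *; [exact: srD|exact: srM]]. Qed.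
Lemma sm_sum R M (I : Type) (r : seq I) (F : I -> K) :
  submod R M -> (forall i, M (F i)) -> M (\sum_(i <- r) F i).
Proof. by move=> hM hF; apply: big_ind => //; [exact: sm0 hM| move=> *; exact: smD hM _ _]. Qed.

Lemma gen_nil R x : gen R [::] x <-> x = 0.
Proof.
split; first by move=> [c [_ [_ ->]]]; rewrite big_ord0.
by move=> ->; exists [::]; split=> //; split=> //; rewrite big_ord0.
Qed.

Lemma gen_cons R a s x :
  gen R (a :: s) x <-> exists r y, R r /\ gen R s y /\ x = r * a + y.
Proof.
split.
  move=> [[|r c] [//= [hs] [hc ->]]].
  exists r, (\sum_(i < size s) c`_i * s`_i); split; first exact: (hc 0%N).
  split; last by rewrite big_ord_recl.
  exists c; split=> //; split=> // i hi; exact: (hc i.+1).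
move=> [r [y [hr [[c [hs [hc ->]]] ->]]]].
exists (r :: c); split; first by rewrite /= hs.
split; first by case=> //= i hi; apply: hc.
by rewrite /= big_ord_recl.
Qed.

Lemma gen_elim R s (P : K -> Prop) :
  P 0 -> (forall i r y, (i < size s)%N -> R r -> P y -> P (r * s`_i + y)) ->
  gen R s `<=` P.
Proof.
elim: s => [|a s IH] h0 hstep x.
  by move=> /gen_nil ->.
move=> /gen_cons [r [y [hr [hy ->]]]].
have := hstep 0%N r y erefl hr; apply.
apply: IH => //= i r' y' hi hr' hy'; exact: (hstep i.+1).
Qed.

Lemma gen_submod R s : subring R -> submod R (gen R s).
Proof.
move=> hR; elim: s => [|a s [IH0 [IHD IHM]]].
  split; first by apply/gen_nil.
  split; first by move=> x y /gen_nil -> /gen_nil ->; apply/gen_nil; rewrite addr0.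
  by move=> r x _ /gen_nil ->; apply/gen_nil; rewrite mulr0.
split; first by apply/gen_cons; exists 0, 0; split; [exact: sr0|split=> //]; rewrite mul0r addr0.
split.
  move=> x y /gen_cons [r [u [hr [hu ->]]]] /gen_cons [r' [u' [hr' [hu' ->]]]].
  apply/gen_cons; exists (r + r'), (u + u'); split; first exact: srD.
  by split; [exact: IHD|rewrite mulrDl addrACA].
move=> r x hr /gen_cons [r' [u [hr' [hu ->]]]].
apply/gen_cons; exists (r * r'), (r * u); split; first exact: srM.
by split; [exact: IHM|rewrite mulrDr mulrA].
Qed.

Lemma gen_nth R s i : subring R -> gen R s s`_i.
Proof.
move=> hR; elim: s i => [|a s IH] i.
  by rewrite nth_nil; apply/gen_nil.
apply/gen_cons; case: i => [|i] /=.
  by exists 1, 0; split; [exact: sr1|split; [exact: sm0 (gen_submod _ hR)|rewrite mul1r addr0]].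
exists 0, s`_i; split; [exact: sr0|split=> //]; by rewrite mul0r add0r.
Qed.

Lemma gen_sub R M s : submod R M -> (forall i, M s`_i) -> gen R s `<=` M.
Proof.
move=> hM hs; apply: gen_elim; first exact: sm0 hM.
move=> i r y _ hr hy; exact: (smD hM (smM hM hr (hs i)) hy).
Qed.

Lemma gen_eq_nth R s t : subring R -> (forall i, s`_i = t`_i) -> gen R s = gen R t.
Proof.
move=> hR h; apply/seteqP; split; apply: gen_sub; try exact: gen_submod.
  by move=> i; rewrite h; apply: gen_nth.
by move=> i; rewrite -h; apply: gen_nth.
Qed.

Lemma gen_cat_l R s t : subring R -> gen R s `<=` gen R (s ++ t).
Proof.
move=> hR; apply: gen_sub; first exact: gen_submod.
move=> i; case: (ltnP i (size s)) => hi.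
  by have := gen_nth (s ++ t) i hR; rewrite nth_cat hi.
by rewrite nth_default //; apply: sm0 (gen_submod _ hR).
Qed.

Lemma gen_cat_r R s t : subring R -> gen R t `<=` gen R (s ++ t).
Proof.
move=> hR; apply: gen_sub; first exact: gen_submod.
move=> i; have := gen_nth (s ++ t) (size s + i) hR.
by rewrite nth_cat ltnNge leq_addr /= addKn.
Qed.


Lemma pm0 E T : prodmod E T 0.
Proof. by exists [::], [::]; do 3!split=> //; rewrite big_ord0. Qed.

Lemma pm_cons E T e t y : E e -> T t -> prodmod E T y -> prodmod E T (e * t + y).
Proof.
move=> he ht [es [ts [hs [hes [hts ->]]]]].
exists (e :: es), (t :: ts); split; first by rewrite /= hs.
split; first by case=> //= i; apply: hes.
split; first by case=> //= i; apply: hts.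
by rewrite big_ord_recl.
Qed.

Lemma pm_elim E T (P : K -> Prop) :
  P 0 -> (forall e t y, E e -> T t -> P y -> P (e * t + y)) -> prodmod E T `<=` P.
Proof.
move=> h0 hs x [es [ts [hz [hes [hts ->]]]]].
elim: es ts hz hes hts => [|e es IH] [|t ts] //= hz hes hts.
  by rewrite big_ord0.
rewrite big_ord_recl /=; apply: hs; [exact: (hes 0%N)|exact: (hts 0%N)|].
by apply: IH => [|i hi|i hi]; [case: hz|exact: (hes i.+1)|exact: (hts i.+1)].
Qed.

Lemma pm_add E T x y : prodmod E T x -> prodmod E T y -> prodmod E T (x + y).
Proof.
move=> hx hy; move: x hx; apply: pm_elim; first by rewrite add0r.
by move=> e t z he ht hz; rewrite -addrA; apply: pm_cons.
Qed.

Lemma pm_submod E T : subring T -> submod T (prodmod E T).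
Proof.
move=> hT; split; first exact: pm0.
split; first exact: pm_add.
move=> r x hr; move: x; apply: pm_elim; first by rewrite mulr0; apply: pm0.
move=> e t y he ht hy; rewrite mulrDr mulrCA; apply: pm_cons => //; exact: srM.
Qed.

Lemma pm_incl E T : T 1 -> E `<=` prodmod E T.
Proof. by move=> h1 e he; rewrite -[e]addr0 -[e]mulr1; apply: pm_cons => //; apply: pm0. Qed.

Lemma pm_sub E T M : submod T M -> E `<=` M -> prodmod E T `<=` M.
Proof.
move=> hM hE; apply: pm_elim; first exact: sm0 hM.
move=> e t y he ht hy; apply: (smD hM) => //; rewrite mulrC; exact: (smM hM ht (hE _ he)).
Qed.

Lemma pm_mono E E' T T' : E `<=` E' -> T `<=` T' -> prodmod E T `<=` prodmod E' T'.
Proof.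
move=> hE hT; apply: pm_elim; first exact: pm0.
by move=> e t y he ht hy; apply: pm_cons; [apply: hE|apply: hT|].
Qed.

Lemma pm_gen D T s : subring D -> subring T -> D `<=` T -> prodmod (gen D s) T = gen T s.
Proof.
move=> hD hT hDT; apply/seteqP; split.
  apply: pm_sub; first exact: gen_submod.
  apply: gen_sub; first exact: sm_sub (gen_submod _ hT) hDT.
  move=> i; exact: gen_nth.
apply: gen_sub; first exact: pm_submod.
move=> i; apply: pm_incl; [exact: sr1|exact: gen_nth].
Qed.

Lemma pm_self D T : subring D -> subring T -> D `<=` T -> prodmod D T = T.
Proof.
move=> hD hT hDT; apply/seteqP; split.
  apply: pm_sub => //; exact: sm_self.
move=> t ht; rewrite -[t]mulr1; apply: (smM (pm_submod _ hT) ht).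
apply: pm_incl; [exact: sr1|exact: sr1].
Qed.

End Basics.
Section Star.
Variable K : fieldType.
Variables (R : set K) (st : set K -> set K).
Hypothesis hR : subring R.
Hypothesis hst : semistar R st.
Implicit Types (E F G I Q M : set K) (s : seq K).

Local Notation sf := (star_f R st).
Local Notation til := (stilde R st).

Lemma st_fbar E : Fbar R E -> Fbar R (st E). Proof. exact: hst.1. Qed.
Lemma st_submod E : Fbar R E -> submod R (st E). Proof. by move=> /st_fbar []. Qed.
Lemma st_mono E F : Fbar R E -> Fbar R F -> E `<=` F -> st E `<=` st F.
Proof. exact: hst.2.2.1. Qed.
Lemma st_ext E : Fbar R E -> E `<=` st E. Proof. by move=> /hst.2.2.2 []. Qed.
Lemma st_idem E : Fbar R E -> st (st E) = st E. Proof. by move=> /hst.2.2.2 []. Qed.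
Lemma st_smul x E : x != 0 -> Fbar R E -> st (smul x E) = smul x (st E).
Proof. exact: hst.2.1. Qed.

Lemma fbarR : Fbar R R.
Proof. by split; [exact: sm_self|exists 1; split; [exact: oner_neq0|exact: sr1]]. Qed.

Lemma fbar_nz M x : submod R M -> M x -> x != 0 -> Fbar R M.
Proof. by move=> hM hx hx0; split=> //; exists x. Qed.

Lemma fg_nz s x : gen R s x -> x != 0 -> fg R (gen R s).
Proof. move=> hx hx0; split; [exact: fbar_nz (gen_submod _ hR) hx hx0|by exists s]. Qed.

Lemma fg_fbar G : fg R G -> Fbar R G. Proof. by case. Qed.

Lemma ideal_one M : submod R M -> M 1 -> R `<=` M.
Proof. by move=> hM h1 r hr; rewrite -[r]mulr1; apply: (smM hM). Qed.

Lemma sf_mono E F : E `<=` F -> sf E `<=` sf F.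
Proof. by move=> hEF x [G [hG [hGE hx]]]; exists G; split=> //; split=> //; apply: subset_trans hEF. Qed.

Lemma sf_fg G : fg R G -> sf G = st G.
Proof.
move=> hG; apply/seteqP; split.
  move=> x [F [hF [hFG hx]]]; exact: (st_mono (fg_fbar hF) (fg_fbar hG) hFG).
by move=> x hx; exists G; split=> //; split=> //.
Qed.

Lemma fg_join E F G : submod R E -> fg R F -> fg R G -> F `<=` E -> G `<=` E ->
  exists H, [/\ fg R H, H `<=` E, F `<=` H & G `<=` H].
Proof.
move=> hE [hF [s hFs]] [hG [t hGt]] hFE hGE; subst F G.
have [x [hx0 hx]] := hF.2.
have hsub1 : gen R s `<=` gen R (s ++ t) by apply: gen_cat_l.
have hsub2 : gen R t `<=` gen R (s ++ t) by apply: gen_cat_r.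
exists (gen R (s ++ t)); split=> //.
- exact: fg_nz (hsub1 _ hx) hx0.
- apply: (gen_sub hE) => i; case: (ltnP i (size s)) => hi.
    by rewrite nth_cat hi; apply: hFE; apply: gen_nth.
  rewrite nth_cat ltnNge hi /=; apply: hGE; exact: gen_nth.
Qed.

Lemma gen1_fg x : x != 0 -> fg R (gen R [:: x]).
Proof. by move=> hx; apply: (fg_nz (x := x)) => //; exact: (gen_nth [:: x] 0 hR). Qed.

Lemma gen1_sub M x : submod R M -> M x -> gen R [:: x] `<=` M.
Proof. by move=> hM hx; apply: (gen_sub hM); case=> [|[|i]]//=; apply: sm0 hM. Qed.

Lemma sf_ext E : Fbar R E -> E `<=` sf E.
Proof.
move=> [hE [y [hy0 hy]]] x hx.
have hfg := gen1_fg hy0.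
have [H [hH hHE hyH hxH]] : exists H, [/\ fg R H, H `<=` E, gen R [:: y] `<=` H & gen R [:: x] `<=` H].
  case: (eqVneq x 0) => [->|hx0].
    exists (gen R [:: y]); split=> //; first exact: gen1_sub.
    by apply: gen1_sub; [exact: gen_submod|exact: sm0 (gen_submod _ hR)].
  apply: fg_join => //; [exact: gen1_fg| exact: gen1_sub| exact: gen1_sub].
exists H; split=> //; split=> //; apply: st_ext (fg_fbar hH) _ _; apply: hxH.
exact: (gen_nth [:: x] 0 hR).
Qed.

Lemma sf_submod E : Fbar R E -> submod R (sf E).
Proof.
move=> hEb; have hE := hEb.1.
split; first by apply: sf_ext => //; exact: sm0 hE.
split.
  move=> x y [F [hF [hFE hx]]] [G [hG [hGE hy]]].
  have [H [hH hHE hFH hGH]] := fg_join hE hF hG hFE hGE.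
  exists H; split=> //; split=> //; apply: (smD (st_submod (fg_fbar hH))).
    exact: (st_mono (fg_fbar hF) (fg_fbar hH) hFH).
  exact: (st_mono (fg_fbar hG) (fg_fbar hH) hGH).
move=> r x hr [F [hF [hFE hx]]]; exists F; split=> //; split=> //.
exact: (smM (st_submod (fg_fbar hF))).
Qed.

Lemma sf_fbar E : Fbar R E -> Fbar R (sf E).
Proof.
move=> hE; split; first exact: sf_submod.
by have [y [hy0 hy]] := hE.2; exists y; split=> //; apply: sf_ext.
Qed.

Lemma sf_idem E : Fbar R E -> sf (sf E) `<=` sf E.
Proof.
move=> hEb; have hE := hEb.1.
have key : forall s, (forall i, sf E s`_i) -> exists G, [/\ fg R G, G `<=` E & forall i, st G s`_i].
  elim=> [|a s IH] hs.
    have [y [hy0 hy]] := hEb.2.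
    exists (gen R [:: y]); split; [exact: gen1_fg|exact: gen1_sub|].
    move=> i; rewrite nth_nil; exact: sm0 (st_submod (fg_fbar (gen1_fg hy0))).
  have [G1 [hG1 hG1E hG1s]] := IH (fun i => hs i.+1).
  have [G0 [hG0 [hG0E ha]]] := hs 0%N.
  have [H [hH hHE h0H h1H]] := fg_join hE hG0 hG1 hG0E hG1E.
  exists H; split=> //; case=> [|i] /=.
    exact: (st_mono (fg_fbar hG0) (fg_fbar hH) h0H).
  exact: (st_mono (fg_fbar hG1) (fg_fbar hH) h1H (hG1s i)).
move=> x [F [hF [hFs hx]]].
have [hFb [s hFeq]] := hF.
have [G [hG hGE hGs]] : exists G, [/\ fg R G, G `<=` E & forall i, st G s`_i].
  apply: key => i; apply: hFs; rewrite hFeq; exact: gen_nth.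
exists G; split=> //; split=> //.
have hFG : F `<=` st G by rewrite hFeq; apply: (gen_sub (st_submod (fg_fbar hG))).
rewrite -(st_idem (fg_fbar hG)).
exact: (st_mono hFb (st_fbar (fg_fbar hG)) hFG).
Qed.


Lemma submodI A B : submod R A -> submod R B -> submod R (A `&` B).
Proof.
move=> hA hB; split; first by split; [exact: sm0 hA|exact: sm0 hB].
split; first by move=> x y [? ?] [? ?]; split; [exact: smD hA _ _|exact: smD hB _ _].
by move=> r x hr [? ?]; split; [exact: smM hA _ _|exact: smM hB _ _].
Qed.

Definition qclos I := sf I `&` R.

Lemma qclos_q I : Fbar R I -> I `<=` R -> qideal R sf (qclos I) /\ I `<=` qclos I.
Proof.
move=> hI hIR.
have hIq : I `<=` qclos I by move=> x hx; split; [exact: sf_ext|exact: hIR].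
have hsub : submod R (qclos I) by apply: submodI; [exact: sf_submod|exact: sm_self].
have hfb : Fbar R (qclos I).
  by have [y [hy0 hy]] := hI.2; exact: fbar_nz hsub (hIq _ hy) hy0.
split=> //; split=> //; split; first by move=> x [].
apply/seteqP; split.
  move=> x [hx hxR]; split=> //; apply: sf_idem hI _ _.
  by apply: sf_mono hx => y [].
by move=> x hx; split; [exact: sf_ext|case: hx].
Qed.

Lemma q_one Q : qideal R sf Q -> (R `<=` Q <-> Q 1).
Proof.
move=> [hQ _]; split; first by apply; exact: sr1.
by apply: ideal_one; case: hQ.
Qed.

Lemma qmax_not1 Q : qmax R sf Q -> ~ Q 1.
Proof. by move=> [hq [hp _]] /(q_one hq). Qed.

Lemma qmax_submod Q : qmax R sf Q -> submod R Q.
Proof. by move=> [[[]]]. Qed.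

Lemma qmax_nz Q (u : K) : qmax R sf Q -> ~ Q u -> u != 0.
Proof. by move=> hQ hs; apply/eqP => hs0; apply: hs; rewrite hs0; exact: sm0 (qmax_submod hQ). Qed.

Lemma nth_mapb b s i : (map (fun x => b * x) s)`_i = b * s`_i.
Proof. by elim: s i => [|a s IH] [|i] //=; rewrite ?nth_nil mulr0. Qed.

Lemma smul_gen b s : smul b (gen R s) = gen R (map (fun x => b * x) s).
Proof.
apply/seteqP; split.
  move=> _ [y hy <-]; move: y hy; apply: gen_elim.
    by rewrite mulr0; exact: sm0 (gen_submod _ hR).
  move=> i r y _ hr hy; rewrite mulrDr mulrCA -nth_mapb.
  apply: (smD (gen_submod _ hR)) => //; apply: (smM (gen_submod _ hR)) => //.
  exact: gen_nth.
apply: gen_sub.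
  split; first by exists 0; [exact: sm0 (gen_submod _ hR)|rewrite mulr0].
  split.
    move=> _ _ [y hy <-] [y' hy' <-]; exists (y + y'); last by rewrite mulrDr.
    exact: (smD (gen_submod _ hR)).
  move=> r _ hr [y hy <-]; exists (r * y); last by rewrite mulrCA.
  exact: (smM (gen_submod _ hR)).
by move=> i; rewrite nth_mapb; exists s`_i => //; apply: gen_nth.
Qed.

Lemma fg_smul b F : b != 0 -> fg R F -> fg R (smul b F).
Proof.
move=> hb [hF [s hs]]; subst F.
have [y [hy0 hy]] := hF.2.
rewrite smul_gen; apply: (fg_nz (x := b * y)); last by rewrite mulf_neq0.
by rewrite -smul_gen; exists y.
Qed.

Lemma qmax_prime Q a b : qmax R sf Q -> R a -> R b -> Q (a * b) -> ~ Q a -> Q b.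
Proof.
move=> hQ ha hb hab hna.
have [[hQb [hQR hQq]] [hQp hQm]] := hQ.
have hQs := hQb.1.
pose I := fun x => exists q r, Q q /\ R r /\ x = q + r * a.
have hIs : submod R I.
  split; first by exists 0, 0; split; [exact: sm0 hQs|split; [exact: sr0|rewrite mul0r addr0]].
  split.
    move=> _ _ [q [r [hq [hr ->]]]] [q' [r' [hq' [hr' ->]]]].
    exists (q + q'), (r + r'); split; first exact: smD hQs _ _.
    by split; [exact: srD|rewrite mulrDl addrACA].
  move=> c _ hc [q [r [hq [hr ->]]]]; exists (c * q), (c * r).
  split; first exact: smM hQs _ _.
  by split; [exact: srM|rewrite mulrDr mulrA].
have hQI : Q `<=` I by move=> q hq; exists q, 0; split=> //; split; [exact: sr0|rewrite mul0r addr0].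
have hIR : I `<=` R.
  by move=> _ [q [r [hq [hr ->]]]]; apply: srD hR _ _; [exact: hQR|exact: srM].
have hIb : Fbar R I by have [y [hy0 hy]] := hQb.2; exact: fbar_nz hIs (hQI _ hy) hy0.
have [hJq hIJ] := qclos_q hIb hIR.
have haJ : qclos I a.
  by apply: hIJ; exists 0, 1; split; [exact: sm0 hQs|split; [exact: sr1|rewrite mul1r add0r]].
have h1 : qclos I 1.
  apply/(q_one hJq) => r hr; apply: contrapT => hnr.
  have hJQ : qclos I = Q.
    apply: hQm => //; first by move=> /(_ r hr).
    by move=> x hx; apply: hIJ; apply: hQI.
  by apply: hna; rewrite -hJQ.
have [[F [hF [hFI h1F]]] _] := h1.
case: (eqVneq b 0) => [->|hb0]; first exact: sm0 hQs.
rewrite -hQq; split=> //.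
have hbF : smul b F `<=` Q.
  move=> _ [y hy <-]; have [q [r [hq [hr ->]]]] := hFI _ hy.
  rewrite mulrDr; apply: (smD hQs); first exact: smM hQs hb hq.
  by rewrite mulrCA [b * a]mulrC; apply: (smM hQs hr).
exists (smul b F); split; first exact: fg_smul.
split=> //; rewrite st_smul //; last exact: fg_fbar.
by exists 1 => //; rewrite mulr1.
Qed.

Lemma exists_qmax I : submod R I -> I `<=` R -> (exists y, y != 0 /\ I y) -> ~ sf I 1 ->
  exists Q, qmax R sf Q /\ I `<=` Q.
Proof.
move=> hIs hIR hInz hI1.
have hIb : Fbar R I by [].
have [hJq hIJ] := qclos_q hIb hIR.
set J0 := qclos I in hJq hIJ.
have hJ1 : ~ J0 1 by case.
have hJs : submod R J0 by case: hJq => [[]].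
pose P := fun X : set K => X = set0 \/ [/\ qideal R sf X, ~ X 1 & J0 `<=` X].
have [A [hPA hAmax]] : exists A, P A /\ forall B, A `<` B -> ~ P B.
  apply: Zorn_bigcup => Fm hFP htot.
  have hmem X x : Fm X -> X x -> [/\ qideal R sf X, ~ X 1 & J0 `<=` X].
    by move=> hX hx; case: (hFP X hX) => // hX0; move: hx; rewrite hX0.
  have [[X0 [hX0 hX0n]]|hall] := pselect (exists X, Fm X /\ exists x, X x); last first.
    left; apply/seteqP; split=> // x [X hX hx]; exfalso; apply: hall; exists X; split=> //; by exists x.
  right.
  set U := \bigcup_(X in Fm) X.
  have [y0 hy0] := hX0n.
  have [hX0q hX01 hX0J] := hmem X0 y0 hX0 hy0.
  have hfin : forall s, (forall i, U s`_i) ->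
      exists X, [/\ Fm X, qideal R sf X & forall i, X s`_i].
    elim=> [|a s IH] hs.
      exists X0; split=> // i; rewrite nth_nil; exact: sm0 hX0q.1.1.
    have [X' [hX' hX'q hX's]] := IH (fun i => hs i.+1).
    have [Xa hXa haX] := hs 0%N.
    have [hXaq _ _] := hmem Xa _ hXa haX.
    have [hle|hle] := htot Xa X' hXa hX'.
      by exists X'; split=> //; case=> [|i] //=; apply: hle.
    by exists Xa; split=> //; case=> [|i] //=; apply: hle; apply: hX's.
  have hUR : U `<=` R.
    by move=> x [X hX hx]; have [[_ [hXR _]] _ _] := hmem X x hX hx; apply: hXR.
  have hUs : submod R U.
    split; first by exists X0 => //; apply: hX0J; exact: sm0 hJs.
    split.
      move=> x y hx hy.
      have [X [hX hXq hXs]] := hfin [:: x; y] (fun i => match i with 0 => hx | 1 => hy | _ => ltac:(rewrite nth_default //; exists X0 => //; exact: sm0 hX0q.1.1) end).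
      exists X => //; apply: (smD hXq.1.1); [exact: (hXs 0%N)|exact: (hXs 1%N)].
    move=> r x hr [X hX hx]; exists X => //.
    by have [hXq _ _] := hmem X x hX hx; apply: (smM hXq.1.1).
  have hUb : Fbar R U.
    have [y [hy0' hy]] := hInz; split=> //; exists y; split=> //.
    by exists X0 => //; apply: hX0J; apply: hIJ.
  split.
  - split=> //; split=> //; apply/seteqP; split.
      move=> x [[F [hF [hFU hx]]] hxR].
      have [hFb [s hFs]] := hF.
      have [X [hX hXq hXs]] : exists X, [/\ Fm X, qideal R sf X & forall i, X s`_i].
        by apply: hfin => i; apply: hFU; rewrite hFs; apply: gen_nth.
      exists X => //; have [_ [_ hXeq]] := hXq; rewrite -hXeq; split=> //.
      apply: (sf_mono (E := F)); last by exists F; split=> //; split.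
      by rewrite hFs; apply: (gen_sub hXq.1.1).
    by move=> x hx; split; [exact: (sf_ext hUb)|exact: hUR].
  - by move=> [X hX hx]; have [_ hX1 _] := hmem X 1 hX hx.
  - by move=> x hx; exists X0 => //; apply: hX0J.
case: hPA => [hA0|[hAq hA1 hJA]].
  exfalso; apply: (hAmax J0); last by right; split.
  rewrite hA0; split=> // hJ; have [y [hy0 hy]] := hInz.
  by have := hJ y (hIJ _ hy).
exists A; split; last by apply: subset_trans hJA.
split=> //; split; first by move/(q_one hAq).
move=> I' hI'q hI'p hAI'; apply: contrapT => hne.
apply: (hAmax I'); last first.
  right; split=> //; last exact: subset_trans hAI'.
  by move/(q_one hI'q).
split=> // hI'A; apply: hne; apply/seteqP; split=> //.
Qed.

Lemma fg_notin G Q : fg R G -> G `<=` R -> st G 1 -> qmax R sf Q -> exists u, G u /\ ~ Q u.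
Proof.
move=> hG hGR hG1 hQ; apply: contrapT => hn.
have GQ : G `<=` Q by move=> x hx; apply: contrapT => hnx; apply: hn; exists x.
have h1 : sf Q 1 by apply: (sf_mono GQ); rewrite sf_fg.
apply: (qmax_not1 hQ); have [[_ [_ hQq]] _] := hQ.
by rewrite -hQq; split=> //; exact: sr1.
Qed.

Lemma til_of_fg G E x : fg R G -> G `<=` R -> st G 1 -> (forall g, G g -> E (g * x)) ->
  til E x.
Proof.
move=> hG hGR hG1 hE Q hQ; have [u [hu hnu]] := fg_notin hG hGR hG1 hQ.
have hu0 := qmax_nz hQ hnu.
exists (u * x), u; split; first exact: hE.
split; first exact: hGR.
split=> //; split=> //.
by rewrite mulrAC divff // mul1r.
Qed.

Lemma st_eqR G : Fbar R G -> G `<=` R -> st G 1 -> st G = st R.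
Proof.
move=> hG hGR hG1; apply/seteqP; split; first exact: st_mono hG fbarR hGR.
rewrite -(st_idem hG); apply: st_mono fbarR (st_fbar hG) _.
exact: ideal_one (st_submod hG) hG1.
Qed.

Lemma st_one_of_eq G : st G = st R -> st G 1.
Proof. by move=> ->; apply: st_ext fbarR _ (sr1 hR). Qed.

Lemma fg_of_til E x : is_quotient_field R -> Fbar R E -> til E x ->
  exists G, [/\ fg R G, G `<=` R, st G 1 & forall g, G g -> E (g * x)].
Proof.
move=> hqf hE htil.
have hEs := hE.1.
pose I := fun r => R r /\ E (r * x).
have hIs : submod R I.
  split; first by split; [exact: sr0|rewrite mul0r; exact: sm0 hEs].
  split.
    move=> a b [ha hax] [hb hbx]; split; first exact: srD.
    by rewrite mulrDl; exact: smD hEs hax hbx.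
  move=> c a hc [ha hax]; split; first exact: srM.
  by rewrite -mulrA; exact: smM hEs hc hax.
have hInz : exists y, y != 0 /\ I y.
  have [e [he0 he]] := hE.2.
  have [p [q [hp [hq [hq0 hpq]]]]] := hqf e.
  have [a [b [ha [hb [hb0 hab]]]]] := hqf x.
  have hp0 : p != 0 by apply: contraNneq he0 => hp0; rewrite hpq hp0 mul0r.
  exists (p * b); split; first by rewrite mulf_neq0.
  split; first exact: srM.
  have -> : p * b * x = (q * a) * e.
    rewrite hab hpq; field; by apply/andP.
  by apply: smM hEs _ he; exact: srM.
have [h1|hn1] := pselect (sf I 1).
  have [F [hF [hFI hF1]]] := h1.
  exists F; split=> //; first by move=> g /hFI [].
  by move=> g /hFI [].
have [Q [hQ hIQ]] := exists_qmax hIs (fun r => @proj1 _ _) hInz hn1.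
have [e [u [he [hu [hnu [hu0 hx]]]]]] := htil Q hQ.
exfalso; apply: hnu; apply: hIQ; split=> //.
by rewrite hx mulrC divfK.
Qed.

Lemma st_of_til G : fg R G -> G `<=` R -> til G 1 -> st G 1.
Proof.
move=> hG hGR htil; apply: contrapT => hn.
have hGb := fg_fbar hG.
have hn' : ~ sf G 1 by rewrite sf_fg.
have [Q [hQ hGQ]] := exists_qmax hGb.1 hGR hGb.2 hn'.
have [g [u [hg [hu [hnu [hu0 h1]]]]]] := htil Q hQ.
apply: hnu; have -> : u = g by rewrite -[g](divfK hu0) -h1 mul1r.
exact: hGQ.
Qed.

Lemma til_mono E F : E `<=` F -> til E `<=` til F.
Proof.
move=> hEF x hx Q hQ; have [e [u [he hrest]]] := hx Q hQ.
by exists e, u; split=> //; apply: hEF.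
Qed.

Lemma til_ext E : E `<=` til E.
Proof.
move=> e he Q hQ; exists e, 1; split=> //; split; first exact: sr1.
split; first exact: qmax_not1.
by split; [exact: oner_neq0|rewrite divr1].
Qed.

Lemma til_eqR G : fg R G -> G `<=` R -> st G 1 -> til G = til R.
Proof.
move=> hG hGR hG1; apply/seteqP; split; first exact: til_mono.
move=> x hx Q hQ.
have [e [u [he [hu [hnu [hu0 ->]]]]]] := hx Q hQ.
have [g [hg hng]] := fg_notin hG hGR hG1 hQ.
have hg0 := qmax_nz hQ hng.
exists (g * e), (g * u); split.
  by rewrite mulrC; apply: (smM (fg_fbar hG).1).
split; first by apply: srM => //; apply: hGR.
split; first by move=> /(qmax_prime hQ (hGR _ hg) hu) /(_ hng).
split; first by rewrite mulf_neq0.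
by field; apply/andP.
Qed.

Lemma til_add E x y : submod R E -> til E x -> til E y -> til E (x + y).
Proof.
move=> hE hx hy Q hQ.
have [e [u [he [hu [hnu [hu0 ->]]]]]] := hx Q hQ.
have [e' [v [he' [hv [hnv [hv0 ->]]]]]] := hy Q hQ.
exists (v * e + u * e'), (u * v); split.
  by apply: (smD hE); apply: (smM hE).
split; first exact: srM.
split; first by move=> /(qmax_prime hQ hu hv) /(_ hnu).
split; first by rewrite mulf_neq0.
by field; apply/andP.
Qed.

Lemma til_mulR E r x : submod R E -> til R r -> til E x -> til E (r * x).
Proof.
move=> hE hr hx Q hQ.
have [a [u [ha [hu [hnu [hu0 ->]]]]]] := hr Q hQ.
have [e [v [he [hv [hnv [hv0 ->]]]]]] := hx Q hQ.
exists (a * e), (u * v); split; first by apply: (smM hE).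
split; first exact: srM.
split; first by move=> /(qmax_prime hQ hu hv) /(_ hnu).
split; first by rewrite mulf_neq0.
by field; apply/andP.
Qed.

Lemma til_idem E : submod R E -> til (til E) `<=` til E.
Proof.
move=> hE x hx Q hQ.
have [y [v [hy [hv [hnv [hv0 ->]]]]]] := hx Q hQ.
have [e [u [he [hu [hnu [hu0 ->]]]]]] := hy Q hQ.
exists e, (u * v); split=> //.
split; first exact: srM.
split; first by move=> /(qmax_prime hQ hu hv) /(_ hnu).
split; first by rewrite mulf_neq0.
by field; apply/andP.
Qed.

Lemma til_submod E : submod R E -> submod R (til E).
Proof.
move=> hE; split; first by apply: til_ext; exact: sm0 hE.
split; first by move=> x y; apply: til_add.
move=> r x hr; apply: til_mulR => //; exact: til_ext.
Qed.

Lemma til_subring : subring (til R).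
Proof.
have hRs := sm_self hR.
split; first by apply: til_ext; exact: sr1.
split; last by move=> x y; apply: til_mulR.
move=> x y hx hy; apply: til_add => //.
rewrite -mulN1r; apply: til_mulR => //; apply: til_ext; apply: srN => //; exact: sr1.
Qed.
End Star.

Lemma pm_fg (K : fieldType) (D T G : set K) : subring D -> subring T -> D `<=` T ->
  fg D G -> fg T (prodmod G T).
Proof.
move=> hD hT hDT [[hGs [y [hy0 hy]]] [s hs]]; subst G.
rewrite (pm_gen _ hD hT hDT); apply: (fg_nz hT (x := y)) => //.
by rewrite -(pm_gen _ hD hT hDT); apply: pm_incl => //; exact: sr1.
Qed.

Lemma content_fg (K : fieldType) (R : set K) (g : {poly K}) : subring R -> g != 0 ->
  fg R (content R g).
Proof.
move=> hR hg; apply: (fg_nz hR (x := lead_coef g)); last by rewrite lead_coef_eq0.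
exact: gen_nth.
Qed.

Lemma content_sub (K : fieldType) (R : set K) (g : {poly K}) : subring R -> polyR R g ->
  content R g `<=` R.
Proof. by move=> hR hg; apply: (gen_sub (sm_self hR)). Qed.

Section Main.
Variable K : fieldType.
Variables (D T : set K) (st st' : set K -> set K).
Hypotheses (hD : subring D) (hqf : is_quotient_field D) (hT : subring T) (hDT : D `<=` T).
Hypotheses (hst : semistar D st) (hst' : semistar T st').

Local Notation til := (stilde D st).
Local Notation til' := (stilde T st').

Lemma link_Na : linked D T st st' -> Na D st `<=` Na T st'.
Proof.
move=> hl _ [f [g [hf [hg [hg0 [hcg ->]]]]]].
exists f, g; split; first by move=> i; apply: hDT.
split; first by move=> i; apply: hDT.
split=> //; split=> //.
rewrite /content -(pm_gen _ hD hT hDT); apply: hl => //.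
  exact: content_fg.
exact: content_sub.
Qed.

Lemma Na_link : Na D st `<=` Na T st' -> linked D T st st'.
Proof.
move=> hNa F [hFb [s hs]] hFD hFst; subst F.
pose g := Poly s.
have hcg R : subring R -> content R g = gen R s.
  by move=> hR; rewrite /content; apply: gen_eq_nth => // i; rewrite [LHS]coef_Poly.
have hg0 : g != 0.
  apply/eqP => hg0; have [y [hy0 hy]] := hFb.2; move/eqP: hy0; apply.
  have : gen D s `<=` [set 0].
    apply: (gen_sub (R := D)).
      split=> //; split; first by move=> a b -> ->; rewrite addr0.
      by move=> r a _ ->; rewrite mulr0.
    by move=> i; rewrite -coef_Poly -/g hg0 coef0.
  by apply.
have hgD : polyR D g.
  by move=> i; rewrite coef_Poly; apply: hFD; apply: gen_nth.
have hz : Na D st (tofrac 1 / tofrac g).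
  exists 1, g; split; first by move=> i; rewrite coef1; case: (i == 0)%N; [exact: sr1|exact: sr0].
  by split=> //; split=> //; split=> //; rewrite hcg.
have [f' [g' [hf' [hg' [hg'0 [hcg' heq]]]]]] := hNa _ hz.
have htg : tofrac g != 0 :> {fraction {poly K}} by rewrite tofrac_eq0.
have htg' : tofrac g' != 0 :> {fraction {poly K}} by rewrite tofrac_eq0.
have hg'e : g' = f' * g.
  apply/eqP; rewrite -tofrac_eq tofracM; apply/eqP.
  have e1 := congr1 (fun w => w * (tofrac g * tofrac g')) heq; simpl in e1.
  move: e1; rewrite tofrac1 div1r (mulKf htg) => ->.
  by rewrite [tofrac g * _]mulrC mulrA (divfK htg').
have hgT : polyR T g by move=> i; apply: hDT.
have hsub1 : content T g' `<=` content T g.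
  apply: (gen_sub (gen_submod _ hT)) => i.
  rewrite hg'e coefM; apply: big_ind => [|a b ha hb|j _].
  - exact: sm0 (gen_submod _ hT).
  - exact: smD (gen_submod _ hT) ha hb.
  - by apply: (smM (gen_submod _ hT)); [exact: hf'|exact: gen_nth].
have hsub2 := content_sub hT hgT.
have hfg := fg_fbar (content_fg hT hg0).
have hfg' := fg_fbar (content_fg hT hg'0).
have heqT : st' (content T g) = st' T.
  apply/seteqP; split; first exact: (st_mono hst' hfg (fbarR hT) hsub2).
  by rewrite -hcg'; exact: (st_mono hst' hfg' hfg hsub1).
by rewrite (pm_gen _ hD hT hDT) -hcg.
Qed.


Lemma hT1 : T 1. Proof. exact: sr1. Qed.
Lemma hD1 : D 1. Proof. exact: sr1. Qed.

Lemma pmT_sub G : G `<=` T -> prodmod G T `<=` T.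
Proof. by move=> hG; apply: pm_sub => //; exact: sm_self. Qed.

Lemma link_iii : linked D T st st' ->
  forall E, Fbar D E -> til E `<=` til' (prodmod E T).
Proof.
move=> hl E hE x hx.
have [G [hG hGD hG1 hGx]] := fg_of_til hD hst hqf hE hx.
have hGst := st_eqR hD hst (fg_fbar hG) hGD hG1.
have hlk := hl G hG hGD hGst.
apply: (til_of_fg hT hst' (pm_fg hD hT hDT hG)).
- by apply: pmT_sub => y /hGD; apply: hDT.
- exact: (st_one_of_eq hT hst').
- apply: pm_sub.
    split; first by rewrite mul0r; exact: pm0.
    split; first by move=> a b ha hb; rewrite mulrDl; exact: pm_add.
    by move=> r a hr ha; rewrite -mulrA; apply: (smM (pm_submod _ hT)).
  by move=> g hg; exact: (pm_incl hT1 (hGx g hg)).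
Qed.

Lemma iii_link : (forall E, Fbar D E -> til E `<=` til' (prodmod E T)) ->
  linked D T st st'.
Proof.
move=> h3 F hF hFD hFst.
have hF1 := st_one_of_eq hD hst hFst.
have htF : til F 1.
  by apply: (til_of_fg hD hst hF hFD hF1) => g hg; rewrite mulr1.
have hFTD : prodmod F T `<=` T by apply: pmT_sub => y /hFD; apply: hDT.
have hfg := pm_fg hD hT hDT hF.
apply: (st_eqR hT hst' (fg_fbar hfg) hFTD).
apply: (st_of_til hT hst' hfg hFTD).
exact: h3 (fg_fbar hF) _ htF.
Qed.

Lemma link_iv : linked D T st st' -> linked D T til til'.
Proof.
move=> hl F hF hFD htil.
have hF1 : til F 1 by rewrite htil; exact: (til_ext (st:=st) hD hD1).
have hFs1 := st_of_til hD hst hF hFD hF1.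
have hlk := hl F hF hFD (st_eqR hD hst (fg_fbar hF) hFD hFs1).
have hFTD : prodmod F T `<=` T by apply: pmT_sub => y /hFD; apply: hDT.
apply: (til_eqR hT hst' (pm_fg hD hT hDT hF) hFTD).
exact: (st_one_of_eq hT hst').
Qed.

Lemma iv_link : linked D T til til' -> linked D T st st'.
Proof.
move=> hl F hF hFD hFst.
have hF1 := st_one_of_eq hD hst hFst.
have htil := til_eqR hD hst hF hFD hF1.
have hlk := hl F hF hFD htil.
have hFTD : prodmod F T `<=` T by apply: pmT_sub => y /hFD; apply: hDT.
have hfg := pm_fg hD hT hDT hF.
apply: (st_eqR hT hst' (fg_fbar hfg) hFTD).
apply: (st_of_til hT hst' hfg hFTD).
by rewrite hlk; exact: (til_ext (st:=st') hT hT1).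
Qed.

Lemma iii_v : (forall E, Fbar D E -> til E `<=` til' (prodmod E T)) ->
  overring (til D) (til' T) /\ linked (til D) (til' T) til til'.
Proof.
move=> h3.
have hT1s := til_subring hT hst'.
have hD1s := til_subring hD hst.
have hDD1 : D `<=` til D := @til_ext _ _ st hD D.
have hTT1 : T `<=` til' T := @til_ext _ _ st' hT T.
have hD1T1 : til D `<=` til' T.
  by rewrite -{2}(pm_self hD hT hDT); apply: h3; exact: fbarR.
split; first by split.
move=> F hF hFD1 htilF.
have hFb : Fbar D F.
  by have [[hFs hnz] _] := hF; split=> //; exact: sm_sub hFs hDD1.
have hF1 : til F 1 by rewrite htilF; apply: (til_ext hD); apply: hDD1; exact: hD1.
have h1 : til' (prodmod F (til' T)) 1.
  apply: (til_mono (E := prodmod F T)); first exact: pm_mono.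
  exact: h3 hFb _ hF1.
have hFT1s : submod T (prodmod F (til' T)) := sm_sub (pm_submod _ hT1s) hTT1.
have hFT1sub : prodmod F (til' T) `<=` til' T.
  apply: pm_sub; first exact: sm_self.
  by move=> y /hFD1; apply: hD1T1.
apply/seteqP; split; first exact: til_mono.
have hT1N : til' T `<=` til' (prodmod F (til' T)).
  move=> t ht; rewrite -[t]mulr1; exact: (til_mulR hT hst' hFT1s ht h1).
move=> x /(til_mono hT1N); apply: til_idem => //.
Qed.

Lemma v_link : overring (til D) (til' T) /\ linked (til D) (til' T) til til' ->
  linked D T st st'.
Proof.
move=> [[hT1s hD1T1] hl5] F hF hFD hFst.
have hD1s := til_subring hD hst.
have hDD1 : D `<=` til D := @til_ext _ _ st hD D.
have hTT1 : T `<=` til' T := @til_ext _ _ st' hT T.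
have hF1 := st_one_of_eq hD hst hFst.
have htil := til_eqR hD hst hF hFD hF1.
pose F1 := prodmod F (til D).
have hF1fg : fg (til D) F1 := pm_fg hD hD1s hDD1 hF.
have hF1D1 : F1 `<=` til D.
  apply: pm_sub; first exact: sm_self.
  by move=> y /hFD; apply: hDD1.
have hF1til : til F1 = til (til D).
  apply/seteqP; split; first exact: til_mono.
  move=> x /(til_idem hD hst (sm_self hD)); rewrite -htil; apply: til_mono.
  apply: pm_incl; apply: hDD1; exact: hD1.
have hlk := hl5 F1 hF1fg hF1D1 hF1til.
have hFTD : prodmod F T `<=` T by apply: pmT_sub => y /hFD; apply: hDT.
have hfg := pm_fg hD hT hDT hF.
have hFTs : submod T (prodmod F T) := pm_submod _ hT.
pose N := til' (prodmod F T).
have hNs : submod (til' T) N.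
  split; first by apply: (til_ext hT); exact: pm0.
  split; first by move=> a b; apply: til_add.
  by move=> r a hr; apply: til_mulR.
have hFN : F `<=` N by move=> y hy; apply: (til_ext hT); exact: (pm_incl hT1 hy).
have hF1N : F1 `<=` N by apply: pm_sub => //; exact: sm_sub hNs hD1T1.
have hPN : prodmod F1 (til' T) `<=` N by apply: pm_sub.
have hN1 : N 1.
  apply: (til_idem hT hst' hFTs); apply: (til_mono hPN).
  by rewrite hlk; apply: (til_ext hT); apply: hTT1; exact: hT1.
apply: (st_eqR hT hst' (fg_fbar hfg) hFTD).
exact: (st_of_til hT hst' hfg hFTD).
Qed.

End Main.

Unset Implicit Arguments.
Set Strict Implicit.

Theorem theorem3p8 (K : fieldType) (D T : set K) (st st' : set K -> set K) :
  subring D -> is_quotient_field D -> overring D T ->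
  semistar D st -> semistar T st' ->
  [<-> linked D T st st';
       Na D st `<=` Na T st';
       (forall E, Fbar D E -> stilde D st E `<=` stilde T st' (prodmod E T));
       linked D T (stilde D st) (stilde T st');
       overring (stilde D st D) (stilde T st' T) /\
       linked (stilde D st D) (stilde T st' T) (stilde D st) (stilde T st')].
Proof.
move=> hD hqf [hT hDT] hst hst'.
tfae.
- exact: link_Na.
- by move=> h; apply: link_iii => //; apply: Na_link.
- by move=> h; apply: link_iv => //; apply: iii_link.
- by move=> h; apply: iii_v => //; apply: link_iii => //; apply: iv_link.
- exact: v_link.
Qed.
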